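(* Let $M\ge2$ and let $w,h$ be positive integers with $w\cdot h<\frac N2+1-\log_M N$. Consider the shallow ConvNet with $w\times h$ convolutional receptive field, ReLU activation and average pooling, whose $y$-th score function is $$h_y(X)=\sum_{z=1}^Z a^y_z\,\frac1N\sum_{i=1}^N\max\Big\{0,\sum_{j=1}^{w\cdot h}\sum_{d=1}^M A^{z,i}_{d,j}\,f_{\theta_d}(\mathbf x_{\rho(j;i)})\Big\},$$ where terms with $\rho(j;i)$ out of bounds are omitted (zero padding). Then this network is not universal: for any templates $\mathbf x^{(1)},\dots,\mathbf x^{(M)}\in\mathbb R^s$ there exists a tensor $\mathcal A\in\mathbb R^{M\times\cdots\times M}$ of order $N$ such that $\mathcal A\neq\mathcal A(h_y)$ for every $Z$, every $f_{\theta_1},\dots,f_{\theta_M}\in\mathcal F$ and all weights $A^{z,i}\in\mathbb R^{M\times wh}$, $\mathbf a^y\in\mathbb R^Z$.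
   Context: Inputs are $X=(\mathbf x_1,\dots,\mathbf x_N)\in(\mathbb R^s)^N$, where the $N$ patches are located at the $N$ positions of a 2D spatial grid. For a position $i$ and $j\in[w\cdot h]$, $\rho(j;i)$ denotes the $j$-th position of the $w\times h$ spatial window around position $i$ (the $w\cdot h$ window positions are distinct; some may fall outside the grid). Representation functions come from a family $\mathcal F=\{f_\theta:\mathbb R^s\to\mathbb R:\theta\in\Theta\}$. For templates $\mathbf x^{(1)},\dots,\mathbf x^{(M)}\in\mathbb R^s$ the grid tensor of $h:(\mathbb R^s)^N\to\mathbb R$ is the order-$N$ tensor $\mathcal A(h)_{d_1,\dots,d_N}=h(\mathbf x^{(d_1)},\dots,\mathbf x^{(d_N)})$, $d_i\in[M]$. *)

(* Defs.v *)
From HB Require Import structures.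
From mathcomp Require Import all_boot all_order all_algebra.
From mathcomp Require Import all_classical all_reals all_analysis.
Set Implicit Arguments. Unset Strict Implicit. Unset Printing Implicit Defensive.
Import Order.TTheory GRing.Theory Num.Theory.
Local Open Scope ring_scope.

(* A window structure on N grid positions: [rho i j] is the j-th position
   (j < w*h) of the window around position i, or [None] if it falls outside
   the grid (zero padding). *)
Definition window (N wh : nat) := 'I_N -> 'I_wh -> option 'I_N.

Definition window_distinct (N wh : nat) (rho : window N wh) : Prop :=
  forall (i : 'I_N) (j j' : 'I_wh) (k : 'I_N),
    rho i j = Some k -> rho i j' = Some k -> j = j'.

Definition shallow_relu_score (R : realType) (s N M w h Z : nat)
  (rho : window N (w * h)) (f : 'I_M -> 'rV[R]_s -> R)
  (a : 'I_Z -> R) (A : 'I_Z -> 'I_N -> 'M[R]_(M, w * h))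
  (X : 'I_N -> 'rV[R]_s) : R :=
  \sum_(z < Z) a z * ((N%:R)^-1 *
    \sum_(i < N) Num.max 0
      (\sum_(j < w * h)
         match rho i j with
         | Some k => \sum_(d < M) A z i d j * f d (X k)
         | None => 0
         end)).

Definition grid_tensor (R : realType) (s N M : nat)
  (hf : ('I_N -> 'rV[R]_s) -> R) (tmpl : 'I_M -> 'rV[R]_s)
  : {ffun {ffun 'I_N -> 'I_M} -> R} :=
  [ffun d : {ffun 'I_N -> 'I_M} => hf (fun i => tmpl (d i))].

(* Main.v *)
Require Import Defs.
From HB Require Import structures.
From mathcomp Require Import all_boot all_order all_algebra.
From mathcomp Require Import all_classical all_reals all_analysis.
From mathcomp Require Import lra.
Import Order.TTheory GRing.Theory Num.Theory.
Local Open Scope ring_scope.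

Lemma count_lemma (R : realType) (N M wh : nat)
  (hN : (2 <= N)%N) (hM : (2 <= M)%N)
  (hwh : (wh%:R : R) < N%:R / 2 + 1 - ln (N%:R : R) / ln (M%:R : R)) :
  (N * M ^ wh < M ^ N)%N.
Proof.
have M1 : (1 : R) < M%:R by rewrite ltr1n.
have L0 : 0 < ln (M%:R : R) by apply: ln_gt0.
have N2 : (2 : R) <= N%:R by rewrite ler_nat.
have Mp : (0 : R) < M%:R by lra.
have Np : (0 : R) < N%:R by lra.
set L := ln (M%:R : R) in hwh L0.
set x := ln (N%:R : R) / L in hwh.
have hx : x * L = ln (N%:R : R) by rewrite /x divfK // gt_eqF.
have H1 : (wh%:R - (N%:R - x)) * L < 0.
  rewrite pmulr_llt0 // subr_lt0.
  have : (N%:R / 2 + 1 : R) <= N%:R by lra.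
  move: hwh; clear; move: (wh%:R : R) (N%:R : R) x => u v y; lra.
have H2 : ln ((N * M ^ wh)%:R : R) < ln ((M ^ N)%:R : R).
  rewrite natrM.
  rewrite !natrX.
  rewrite lnM ?posrE ?exprn_gt0 ?ltr0n ?expn_gt0 ?(leq_trans _ hM) ?(leq_trans _ hN) //.
  rewrite !lnXn //.
  rewrite -(mulr_natr L wh) -(mulr_natr L N) -hx.
  move: H1; rewrite !mulrBl.
  rewrite [L * wh%:R]mulrC [L * N%:R]mulrC.
  move: (wh%:R * L) (N%:R * L) (x * L) => u v y; lra.
have H3 : ((N * M ^ wh)%:R : R) < (M ^ N)%:R.
  move: H2; rewrite ltr_ln // posrE ltr0n ?muln_gt0 expn_gt0 ?(leq_trans _ hM) ?(leq_trans _ hN) //.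
by rewrite ltr_nat in H3.
Qed.

Theorem claim6 (R : realType) (s N M w h : nat)
  (Theta : Type) (fam : Theta -> 'rV[R]_s -> R)
  (rho : window N (w * h))
  (hrho : window_distinct rho)
  (hN : (2 <= N)%N) (hM : (2 <= M)%N) (hw : (0 < w)%N) (hh : (0 < h)%N)
  (hwh : ((w * h)%:R : R) < N%:R / 2 + 1 - ln (N%:R : R) / ln (M%:R : R)) :
  forall tmpl : 'I_M -> 'rV[R]_s,
  exists T : {ffun {ffun 'I_N -> 'I_M} -> R},
    forall (Z : nat) (theta : 'I_M -> Theta) (a : 'I_Z -> R)
           (A : 'I_Z -> 'I_N -> 'M[R]_(M, w * h)),
      T <> grid_tensor (shallow_relu_score rho (fun d => fam (theta d)) a A) tmpl.
Proof.
move=> tmpl.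
have hcnt := @count_lemma R _ _ _ hN hM hwh.
have M0 : (0 < M)%N by apply: leq_trans hM.
pose m0 : 'I_M := Ordinal M0.
pose K := {ffun 'I_N -> 'I_M}.
pose E := {ffun 'I_(w * h) -> 'I_M}.
pose ewin (i : 'I_N) (d : K) : E :=
  [ffun j => match rho i j with Some k => d k | None => m0 end].
pose vec (p : 'I_N * E) : {ffun K -> R^o} :=
  [ffun d => ((ewin p.1 d == p.2)%:R : R)].
pose vs := [seq vec p | p <- enum {: (('I_N * E)%type) }].
have hsz : size vs = (N * M ^ (w * h))%N.
  by rewrite size_map -cardE card_prod card_ffun !card_ord.
have hns : ~~ (fullv <= <<vs>>)%VS.
  apply/negP => /dimvS; rewrite dimvf.
  have -> : dim {ffun K -> R^o} = #|K| by rewrite [LHS]/dim /= muln1.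
  move=> hle; have := leq_trans hle (dim_span vs).
  by rewrite hsz card_ffun !card_ord leqNgt hcnt.
have [T hT] : exists T : {ffun K -> R^o}, T \notin <<vs>>%VS.
  apply: contrapT => hn; move/negP: hns; apply; apply/subvP => T _.
  by apply/negPn/negP => hT; apply: hn; exists T.
exists T => Z theta a A hE; move/negP: hT; apply.
pose f := fun d => fam (theta d).
pose S' (z : 'I_Z) (i : 'I_N) (e : E) :=
  \sum_(j < w * h) match rho i j with
                   | Some _ => \sum_(dd < M) A z i dd j * f dd (tmpl (e j))
                   | None => 0 end.
pose c (p : 'I_N * E) : R :=
  \sum_(z < Z) a z * ((N%:R)^-1 * Num.max 0 (S' z p.1 p.2)).
have -> : T = \sum_(p : ('I_N * E)%type) c p *: vec p.
  rewrite hE; apply/ffunP => d; rewrite !ffunE sum_ffunE.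
  rewrite /shallow_relu_score.
  under [RHS]eq_bigr do rewrite ffunE ffunE.
  rewrite -(pair_bigA _ (fun i e => c (i, e) *: ((ewin i d == e)%:R : R^o))) /=.
  under [RHS]eq_bigr => i _.
    rewrite (bigD1 (ewin i d)) //= eqxx big1 ?addr0; last first.
      by move=> e; rewrite eq_sym => /negbTE ->; rewrite scaler0.
    rewrite /c /= scaler1.
  over.
  rewrite exchange_big /=; apply: eq_bigr => z _.
  rewrite !mulr_sumr; apply: eq_bigr => i _; congr (_ * (_ * Num.max 0 _)).
  rewrite /S'; apply: eq_bigr => j _; rewrite ffunE.
  by case: (rho i j).
apply: memv_suml => p _; apply: memvZ; apply: memv_span.
by apply: map_f; rewrite mem_enum.
Qed.
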